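(* Consider equation (E) and assume each $\tau_i$ is non-decreasing. If $$\limsup_{t\to+\infty}\prod_{j=1}^{m}\bigg(\prod_{i=1}^{m}\int_{\tau_j(t)}^{t}p_i(s)\,ds\bigg)^{1/m}>\frac{1}{m^{m}},$$ then all solutions of (E) oscillate.
   Context: Equation (E) is $x'(t)+\sum_{i=1}^{m}p_i(t)\,x(\tau_i(t))=0$, $t\ge t_0$, where $m\ge1$ is an integer and, for each $i$, $p_i,\tau_i:[t_0,\infty)\to[0,\infty)$ are continuous, $\tau_i(t)\le t$ for $t\ge t_0$, and $\lim_{t\to\infty}\tau_i(t)=\infty$. Let $\tau(t)=\min_i\tau_i(t)$ and $\tau_{(-1)}(t)=\sup\{s:\tau(s)\le t\}$. A solution of (E) is a function $x\in C([T_0,\infty);\mathbb{R})$ for some $T_0\ge t_0$ which is continuously differentiable on $[\tau_{(-1)}(T_0),\infty)$ and satisfies (E) for $t\ge\tau_{(-1)}(T_0)$. A solution is oscillatory if it has arbitrarily large zeros; ''all solutions oscillate'' means every solution is oscillatory. *)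

(* Defs.v *)
From Stdlib Require Import Reals Lra Lia Classical ClassicalEpsilon.
Open Scope R_scope.

(* Riemann integral of f over [a,b] (the value given by Stdlib's RiemannInt
   when f is Riemann integrable; an unspecified real otherwise). *)
Definition Rint (f : R -> R) (a b : R) : R :=
  epsilon (inhabits 0)
    (fun v => exists pr : Riemann_integrable f a b, RiemannInt pr = v).

Definition Rroot (m : nat) (x : R) : R :=
  if Rle_dec x 0 then 0 else Rpower x (/ INR m).

Definition cont_on_from (a : R) (f : R -> R) : Prop :=
  forall t, a <= t -> forall eps, 0 < eps -> exists delta, 0 < delta /\
    forall s, a <= s -> Rabs (s - t) < delta -> Rabs (f s - f t) < eps.

Definition deriv_from (a : R) (f : R -> R) (t l : R) : Prop :=
  forall eps, 0 < eps -> exists delta, 0 < delta /\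
    forall h, h <> 0 -> Rabs h < delta -> a <= t + h ->
      Rabs ((f (t + h) - f t) / h - l) < eps.

Fixpoint tau_min (tau : nat -> R -> R) (n : nat) (t : R) : R :=
  match n with
  | O => tau O t
  | S k => Rmin (tau_min tau k t) (tau (S k) t)
  end.

(* x, defined on [T0, +oo), is a solution of
   x'(t) + sum_{i<m} p_i(t) x(tau_i(t)) = 0 (indices shifted to 0..m-1).
   T1 is tau_{(-1)}(T0) = sup { s >= t0 : tau(s) <= T0 }. *)
Definition is_solution (m : nat) (t0 : R) (p tau : nat -> R -> R)
    (T0 : R) (x : R -> R) : Prop :=
  t0 <= T0 /\ cont_on_from T0 x /\
  exists T1 : R,
    is_lub (fun s => t0 <= s /\ tau_min tau (m - 1) s <= T0) T1 /\
    exists x' : R -> R,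
      cont_on_from T1 x' /\
      (forall t, T1 <= t -> deriv_from T1 x t (x' t)) /\
      (forall t, T1 <= t ->
         x' t + sum_f_R0 (fun i => p i t * x (tau i t)) (m - 1) = 0).

Definition oscillatory (T0 : R) (x : R -> R) : Prop :=
  forall T, exists t, T <= t /\ T0 <= t /\ x t = 0.

Definition limsup_gt (F : R -> R) (c : R) : Prop :=
  exists eps, 0 < eps /\ forall T, exists t, T <= t /\ c + eps < F t.

(* Main.v *)
Require Import Defs.
From Stdlib Require Import Reals.
Open Scope R_scope.

From Stdlib Require Import Lra Lia ClassicalEpsilon Classical.
From mathcomp Require all_boot all_order all_algebra Rstruct.

Module AMGM.
Import all_boot all_order all_algebra Rstruct.
Import Order.TTheory GRing.Theory Num.Theory.
Local Open Scope R_scope.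

Lemma sum_big (w : nat -> R) (n : nat) :
  sum_f_R0 w n = (\sum_(i < n.+1) w i)%R.
Proof.
elim: n => [|n IH]; first by rewrite big_ord_recr big_ord0 /= add0r.
by rewrite big_ord_recr /= -IH.
Qed.

Lemma prod_big (w : nat -> R) (n : nat) :
  prod_f_R0 w n = (\prod_(i < n.+1) w i)%R.
Proof.
elim: n => [|n IH]; first by rewrite big_ord_recr big_ord0 /= mul1r.
by rewrite big_ord_recr /= -IH.
Qed.

Lemma pow_expr (x : R) n : x ^ n = (x ^+ n)%R.
Proof. elim: n => [//|n IH]; by rewrite /= exprS IH. Qed.

Lemma INR_natr n : INR n = (n%:R)%R.
Proof. elim: n => [//|n IH]; by rewrite S_INR IH -addn1 natrD. Qed.

Lemma amgm_R (m : nat) (w : nat -> R) : le 1 m ->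
  (forall i, lt i m -> 0 <= w i) ->
  INR m ^ m * prod_f_R0 w (Nat.sub m 1) <= (sum_f_R0 w (Nat.sub m 1)) ^ m.
Proof.
case: m => [/ssrnat.leP //|m] _ Hw.
rewrite minusE subSS subn0 sum_big prod_big !pow_expr INR_natr.
have H := @leif_AGM_scaled R ('I_m.+1) predT (fun i => w i).
rewrite card_ord in H.
have H2 := (H _).1.
apply/RleP.
have -> : forall a b : R, Rmult a b = (a * b)%R by [].
have <- : (\prod_(i in predT) (w (nat_of_ord (i : 'I_m.+1)) *+ m.+1) = m.+1%:R ^+ m.+1 * \prod_(i < m.+1) w i)%R.
  rewrite (eq_bigr (fun i : 'I_m.+1 => w i * m.+1%:R)%R); last by move=> i _; rewrite mulr_natr.
  by rewrite big_split /= prodr_const card_ord mulrC.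
apply: H2 => i _ /=; apply: mulrn_wge0; apply/RleP; apply: Hw; apply/ssrnat.ltP; exact: ltn_ord.
Qed.
End AMGM.

From Coquelicot Require Import Coquelicot.
Set Bullet Behavior "Strict Subproofs".


Lemma cont_pt_of_from (a : R) (f : R -> R) (u : R) :
  cont_on_from a f -> a < u -> continuity_pt f u.
Proof.
  intros Hc Hu eps Heps.
  destruct (Hc u (Rlt_le _ _ Hu) eps Heps) as [d [Hd Hf]].
  exists (Rmin d (u - a)). split.
  - apply Rmin_pos; lra.
  - intros x [_ Hx]. simpl in *. unfold R_dist in *.
    assert (Hx1 : Rabs (x - u) < d) by (eapply Rlt_le_trans; [exact Hx| apply Rmin_l]).
    assert (Hx2 : Rabs (x - u) < u - a) by (eapply Rlt_le_trans; [exact Hx| apply Rmin_r]).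
    apply Hf; auto.
    apply Rabs_def2 in Hx2. lra.
Qed.

Lemma deriv_of_from (a : R) (f : R -> R) (t l : R) :
  deriv_from a f t l -> a < t -> derivable_pt_lim f t l.
Proof.
  intros Hd Ht eps Heps.
  destruct (Hd eps Heps) as [d [Hdp Hf]].
  assert (Hpos : 0 < Rmin d (t - a)) by (apply Rmin_pos; lra).
  exists (mkposreal _ Hpos). intros h Hh Hlt. simpl in Hlt.
  assert (Hx1 : Rabs h < d) by (eapply Rlt_le_trans; [exact Hlt| apply Rmin_l]).
  assert (Hx2 : Rabs h < t - a) by (eapply Rlt_le_trans; [exact Hlt| apply Rmin_r]).
  apply Hf; auto. apply Rabs_def2 in Hx2. lra.
Qed.

Lemma rint_RInt (f : R -> R) (a b : R) :
  a <= b -> (forall u, a <= u <= b -> continuity_pt f u) -> Rint f a b = RInt f a b.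
Proof.
  intros Hab Hc. unfold Rint.
  destruct (epsilon_spec (inhabits 0) (fun v => exists pr : Riemann_integrable f a b, RiemannInt pr = v))
    as [pr' Hpr'].
  - exists (RiemannInt (@continuity_implies_RiemannInt f a b Hab Hc)).
    exists (@continuity_implies_RiemannInt f a b Hab Hc). reflexivity.
  - rewrite <- Hpr'. symmetry. apply RInt_Reals.
Qed.

Lemma decr_lemma (f df : R -> R) (a b : R) :
  a <= b -> (forall s, a <= s <= b -> derivable_pt_lim f s (df s)) ->
  (forall s, a <= s <= b -> df s <= 0) -> f b <= f a.
Proof.
  intros Hab Hd Hneg.
  destruct (MVT_gen f a b df) as [c [Hc Heq]].
  - intros x Hx. rewrite Rmin_left, Rmax_right in Hx by lra.
    apply is_derive_Reals. apply Hd. lra.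
  - intros x Hx. rewrite Rmin_left, Rmax_right in Hx by lra.
    apply derivable_continuous_pt. exists (df x). apply Hd. lra.
  - rewrite Rmin_left, Rmax_right in Hc by lra.
    assert (df c <= 0) by (apply Hneg; lra).
    assert (df c * (b - a) <= 0).
    { apply Rmult_le_0_r; lra. }
    lra.
Qed.

Lemma sum_deriv (g : nat -> R -> R) (g' : nat -> R) (s : R) (n : nat) :
  (forall i, (i <= n)%nat -> derivable_pt_lim (g i) s (g' i)) ->
  derivable_pt_lim (fun u => sum_f_R0 (fun i => g i u) n) s (sum_f_R0 g' n).
Proof.
  induction n as [|n IH]; intros H.
  - simpl. apply H. lia.
  - simpl. apply (derivable_pt_lim_plus (fun u => sum_f_R0 (fun i => g i u) n) (g (S n))).
    + apply IH. intros i Hi. apply H. lia.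
    + apply H. lia.
Qed.

Lemma RInt_deriv (f : R -> R) (t0 a s : R) :
  cont_on_from t0 f -> t0 < a -> t0 < s ->
  derivable_pt_lim (fun u => RInt f a u) s (f s).
Proof.
  intros Hc Ha Hs. apply is_derive_Reals.
  apply (is_derive_RInt f (fun u => RInt f a u) a s).
  - apply (locally_interval _ s (Finite t0) p_infty); simpl; auto.
    intros y Hy _. apply (@RInt_correct R_CompleteNormedModule). apply (@ex_RInt_continuous R_CompleteNormedModule).
    intros z Hz. apply continuity_pt_filterlim. apply (cont_pt_of_from t0); auto.
    destruct Hz as [Hz _]. eapply Rlt_le_trans; [| exact Hz].
    apply Rmin_glb_lt; auto.
  - apply continuity_pt_filterlim. apply (cont_pt_of_from t0); auto.
Qed.

Lemma RInt_nonneg (f : R -> R) (t0 a b : R) :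
  cont_on_from t0 f -> t0 < a -> a <= b -> (forall u, a <= u <= b -> 0 <= f u) ->
  0 <= RInt f a b.
Proof.
  intros Hc Ha Hab Hp. apply RInt_ge_0; auto.
  - apply (@ex_RInt_continuous R_CompleteNormedModule). intros z Hz. apply continuity_pt_filterlim.
    apply (cont_pt_of_from t0); auto.
    rewrite Rmin_left in Hz by lra. lra.
  - intros x Hx. apply Hp. lra.
Qed.

Lemma eventually_all (n : nat) (P : nat -> R -> Prop) :
  (forall i, (i < n)%nat -> exists T, forall t, T <= t -> P i t) ->
  exists T, forall t, T <= t -> forall i, (i < n)%nat -> P i t.
Proof.
  induction n as [|n IH]; intros H.
  - exists 0. intros. lia.
  - destruct IH as [T1 HT1].
    { intros i Hi. apply H. lia. }
    destruct (H n ltac:(lia)) as [T2 HT2].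
    exists (Rmax T1 T2). intros t Ht i Hi.
    destruct (Nat.eq_dec i n) as [->|Hne].
    + apply HT2. eapply Rle_trans; [apply Rmax_r | exact Ht].
    + apply HT1; [eapply Rle_trans; [apply Rmax_l | exact Ht] | lia].
Qed.

Lemma sum_nonpos (f : nat -> R) (n : nat) :
  (forall i, (i <= n)%nat -> f i <= 0) -> sum_f_R0 f n <= 0.
Proof.
  induction n as [|n IH]; intros H; simpl.
  - apply H; lia.
  - assert (f (S n) <= 0) by (apply H; lia).
    assert (sum_f_R0 f n <= 0) by (apply IH; intros; apply H; lia). lra.
Qed.

Lemma sum_nonneg (f : nat -> R) (n : nat) :
  (forall i, (i <= n)%nat -> 0 <= f i) -> 0 <= sum_f_R0 f n.
Proof.
  induction n as [|n IH]; intros H; simpl.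
  - apply H; lia.
  - assert (0 <= f (S n)) by (apply H; lia).
    assert (0 <= sum_f_R0 f n) by (apply IH; intros; apply H; lia). lra.
Qed.

Lemma sum_ext (f g : nat -> R) (n : nat) :
  (forall i, (i <= n)%nat -> f i = g i) -> sum_f_R0 f n = sum_f_R0 g n.
Proof.
  induction n as [|n IH]; intros H; simpl.
  - apply H; lia.
  - rewrite IH by (intros; apply H; lia). rewrite (H (S n)) by lia. reflexivity.
Qed.

Lemma sum_opp' (f : nat -> R) (n : nat) :
  sum_f_R0 (fun i => - f i) n = - sum_f_R0 f n.
Proof. induction n as [|n IH]; simpl; [ring| rewrite IH; ring]. Qed.

Lemma prod_ext (f g : nat -> R) (n : nat) :
  (forall i, (i <= n)%nat -> f i = g i) -> prod_f_R0 f n = prod_f_R0 g n.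
Proof.
  induction n as [|n IH]; intros H; simpl.
  - apply H; lia.
  - rewrite IH by (intros; apply H; lia). rewrite (H (S n)) by lia. reflexivity.
Qed.

Lemma prod_mult (f g : nat -> R) (n : nat) :
  prod_f_R0 (fun i => f i * g i) n = prod_f_R0 f n * prod_f_R0 g n.
Proof. induction n as [|n IH]; simpl; [ring| rewrite IH; ring]. Qed.

Lemma prod_pow (f : nat -> R) (k n : nat) :
  prod_f_R0 (fun i => f i ^ k) n = prod_f_R0 f n ^ k.
Proof. induction n as [|n IH]; simpl; [ring| rewrite IH, Rpow_mult_distr; ring]. Qed.

Lemma prod_const (c : R) (n : nat) : prod_f_R0 (fun _ => c) n = c ^ S n.
Proof. induction n as [|n IH]; simpl in *; [ring| rewrite IH; ring]. Qed.

Lemma prod_nonneg (f : nat -> R) (n : nat) :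
  (forall i, (i <= n)%nat -> 0 <= f i) -> 0 <= prod_f_R0 f n.
Proof.
  induction n as [|n IH]; intros H; simpl.
  - apply H; lia.
  - apply Rmult_le_pos; [apply IH; intros; apply H; lia | apply H; lia].
Qed.

Lemma prod_pos (f : nat -> R) (n : nat) :
  (forall i, (i <= n)%nat -> 0 < f i) -> 0 < prod_f_R0 f n.
Proof.
  induction n as [|n IH]; intros H; simpl.
  - apply H; lia.
  - apply Rmult_lt_0_compat; [apply IH; intros; apply H; lia | apply H; lia].
Qed.

Lemma prod_le (f g : nat -> R) (n : nat) :
  (forall i, (i <= n)%nat -> 0 <= f i <= g i) -> prod_f_R0 f n <= prod_f_R0 g n.
Proof.
  induction n as [|n IH]; intros H; simpl.
  - apply H; lia.
  - assert (H1 : 0 <= prod_f_R0 f n) by (apply prod_nonneg; intros; apply H; lia).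
    assert (H2 : prod_f_R0 f n <= prod_f_R0 g n) by (apply IH; intros; apply H; lia).
    destruct (H (S n) ltac:(lia)).
    apply Rmult_le_compat; auto.
Qed.

Lemma pow_lt_l (x y : R) (n : nat) : 0 <= x -> x < y -> (1 <= n)%nat -> x ^ n < y ^ n.
Proof.
  intros Hx Hxy Hn. destruct n as [|n]; [lia|]. simpl.
  assert (x ^ n <= y ^ n) by (apply pow_incr; lra).
  assert (0 <= x ^ n) by (apply pow_le; lra).
  assert (0 < y ^ n) by (apply pow_lt; lra).
  nra.
Qed.

Lemma rroot_pow (m : nat) (A : R) : (1 <= m)%nat -> 0 <= A -> Rroot m A ^ m <= A.
Proof.
  intros Hm HA. unfold Rroot. destruct (Rle_dec A 0).
  - rewrite pow_i by lia. lra.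
  - assert (HA' : 0 < A) by lra.
    rewrite <- Rpower_pow by (unfold Rpower; apply exp_pos).
    rewrite Rpower_mult. rewrite Rinv_l.
    + rewrite Rpower_1 by lra. lra.
    + apply not_0_INR. lia.
Qed.

Lemma rroot_nonneg (m : nat) (A : R) : 0 <= Rroot m A.
Proof.
  unfold Rroot. destruct (Rle_dec A 0); [lra|]. unfold Rpower. left; apply exp_pos.
Qed.

Lemma core (m : nat) (t0 : R) (p tau : nat -> R -> R) (T1 A : R) (z z' : R -> R) :
  (1 <= m)%nat ->
  (forall i, (i < m)%nat -> cont_on_from t0 (p i)) ->
  (forall i t, (i < m)%nat -> t0 <= t -> 0 <= p i t) ->
  (forall i t, (i < m)%nat -> t0 <= t -> tau i t <= t) ->
  (forall i, (i < m)%nat -> forall M, exists T, forall t, T <= t -> M <= tau i t) ->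
  (forall i s t, (i < m)%nat -> t0 <= s -> s <= t -> tau i s <= tau i t) ->
  t0 <= T1 -> T1 < A ->
  (forall s, T1 < s -> derivable_pt_lim z s (z' s)) ->
  (forall s, T1 <= s -> z' s = - sum_f_R0 (fun i => p i s * z (tau i s)) (m - 1)) ->
  (forall s, A <= s -> 0 < z s) ->
  (forall T, exists t, T <= t /\ / (INR m ^ m) <
     prod_f_R0 (fun j => Rroot m (prod_f_R0 (fun i => Rint (p i) (tau j t) t) (m - 1))) (m - 1)) ->
  False.
Proof.
  intros Hm Hpc Hp0 Htle Htinf Htmon Ht0T1 HT1A Hder Heq Hzpos Hlim.
  assert (Him : forall i, (i <= m - 1)%nat -> (i < m)%nat) by (intros; lia).
  destruct (eventually_all m (fun i t => A <= tau i t) (fun i Hi => Htinf i Hi A)) as [T2' HT2'].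
  set (T2 := Rmax T2' A).
  assert (HT2A : A <= T2) by apply Rmax_r.
  assert (HT2t : forall s, T2 <= s -> forall i, (i < m)%nat -> A <= tau i s).
  { intros s Hs i Hi. apply HT2'; auto. eapply Rle_trans; [apply Rmax_l| exact Hs]. }
  assert (Hzdec : forall u v, T2 <= u -> u <= v -> z v <= z u).
  { intros u v Hu Huv. apply (decr_lemma z z' u v); auto.
    - intros s Hs. apply Hder. lra.
    - intros s Hs. rewrite Heq by lra.
      assert (0 <= sum_f_R0 (fun i => p i s * z (tau i s)) (m - 1)); [|lra].
      apply sum_nonneg. intros i Hi. apply Rmult_le_pos.
      + apply Hp0; [auto| lra].
      + left. apply Hzpos. apply HT2t; [lra| auto]. }
  destruct (eventually_all m (fun i t => T2 <= tau i t) (fun i Hi => Htinf i Hi T2)) as [T3' HT3'].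
  set (T3 := Rmax T3' T2).
  assert (HT3T2 : T2 <= T3) by apply Rmax_r.
  assert (HT3t : forall s, T3 <= s -> forall i, (i < m)%nat -> T2 <= tau i s).
  { intros s Hs i Hi. apply HT3'; auto. eapply Rle_trans; [apply Rmax_l| exact Hs]. }
  destruct (eventually_all m (fun i t => T3 <= tau i t) (fun i Hi => Htinf i Hi T3)) as [T4' HT4'].
  set (T4 := Rmax T4' T3).
  assert (HT4T3 : T3 <= T4) by apply Rmax_r.
  destruct (Hlim T4) as [t [Ht Hgt]].
  assert (Htau_t : forall i, (i < m)%nat -> T3 <= tau i t).
  { intros i Hi. apply HT4'; auto. eapply Rle_trans; [apply Rmax_l| exact Ht]. }
  assert (Hy : forall i, (i < m)%nat -> 0 < z (tau i t)).
  { intros i Hi. apply Hzpos. specialize (Htau_t i Hi). lra. }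
  assert (Hrint : forall i j, (i < m)%nat -> (j < m)%nat ->
            Rint (p i) (tau j t) t = RInt (p i) (tau j t) t).
  { intros i j Hi Hj. specialize (Htau_t j Hj). apply rint_RInt.
    - apply Htle; auto. lra.
    - intros u Hu. apply (cont_pt_of_from t0); auto. lra. }
  assert (Ha0 : forall i j, (i < m)%nat -> (j < m)%nat -> 0 <= Rint (p i) (tau j t) t).
  { intros i j Hi Hj. rewrite Hrint by auto. specialize (Htau_t j Hj).
    apply (RInt_nonneg _ t0); auto; [lra| apply Htle; auto; lra |].
    intros u Hu. apply Hp0; auto. lra. }
  assert (KI : forall j, (j < m)%nat ->
     sum_f_R0 (fun i => Rint (p i) (tau j t) t * z (tau i t)) (m - 1) <= z (tau j t)).
  { intros j Hj.
    assert (Haj : T3 <= tau j t) by auto.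
    assert (Hajt : tau j t <= t) by (apply Htle; auto; lra).
    assert (Hdec := decr_lemma
      (fun u => z u + sum_f_R0 (fun i => z (tau i t) * RInt (p i) (tau j t) u) (m - 1))
      (fun s => z' s + sum_f_R0 (fun i => z (tau i t) * p i s) (m - 1))
      (tau j t) t Hajt).
    assert (Hsum0 : sum_f_R0 (fun i => z (tau i t) * RInt (p i) (tau j t) (tau j t)) (m - 1) = 0).
    { rewrite (sum_ext _ (fun _ => 0)).
      - rewrite sum_cte. ring.
      - intros i Hi. rewrite RInt_point. unfold zero; simpl. ring. }
    assert (Hsumt : sum_f_R0 (fun i => z (tau i t) * RInt (p i) (tau j t) t) (m - 1) =
                    sum_f_R0 (fun i => Rint (p i) (tau j t) t * z (tau i t)) (m - 1)).
    { apply sum_ext. intros i Hi. rewrite Hrint by auto. ring. }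
    assert (Hzt : 0 < z t) by (apply Hzpos; lra).
    cut (z t + sum_f_R0 (fun i => z (tau i t) * RInt (p i) (tau j t) t) (m - 1) <=
         z (tau j t) + sum_f_R0 (fun i => z (tau i t) * RInt (p i) (tau j t) (tau j t)) (m - 1)).
    { rewrite Hsum0, Hsumt. lra. }
    apply Hdec.
    - intros s Hs.
      apply (derivable_pt_lim_plus z
        (fun u => sum_f_R0 (fun i => z (tau i t) * RInt (p i) (tau j t) u) (m - 1))).
      + apply Hder. lra.
      + apply (sum_deriv (fun i u => z (tau i t) * RInt (p i) (tau j t) u)
                         (fun i => z (tau i t) * p i s)).
        intros i Hi.
        apply (derivable_pt_lim_scal (fun u => RInt (p i) (tau j t) u)).
        apply (RInt_deriv _ t0); auto; lra.
    - intros s Hs. rewrite Heq by lra.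
      assert (sum_f_R0 (fun i => z (tau i t) * p i s) (m - 1) -
              sum_f_R0 (fun i => p i s * z (tau i s)) (m - 1) <= 0); [|lra].
      rewrite <- minus_sum. apply sum_nonpos. intros i Hi.
      assert (Hi' : (i < m)%nat) by auto.
      assert (z (tau i t) <= z (tau i s)).
      { apply Hzdec.
        - apply HT3t; auto. lra.
        - apply Htmon; auto. lra. lra. }
      assert (0 <= p i s) by (apply Hp0; auto; lra).
      nra. }
  set (K := INR m ^ m).
  set (Y := prod_f_R0 (fun i => z (tau i t)) (m - 1)).
  set (Aj := fun j => prod_f_R0 (fun i => Rint (p i) (tau j t) t) (m - 1)).
  assert (HY : 0 < Y) by (apply prod_pos; auto).
  assert (HK : 0 < K) by (apply pow_lt; apply lt_0_INR; lia).
  assert (HAj : forall j, (j < m)%nat -> 0 <= Aj j).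
  { intros j Hj. apply prod_nonneg. auto. }
  assert (PJ : forall j, (j < m)%nat -> K * (Aj j * Y) <= z (tau j t) ^ m).
  { intros j Hj.
    assert (H1 := AMGM.amgm_R m (fun i => Rint (p i) (tau j t) t * z (tau i t)) Hm).
    rewrite prod_mult in H1. fold K in H1.
    eapply Rle_trans; [apply H1|].
    - intros i Hi. apply Rmult_le_pos; auto. left; auto.
    - apply pow_incr. split; [| apply KI; auto].
      apply sum_nonneg. intros i Hi. apply Rmult_le_pos; auto. left; auto. }
  assert (PP : prod_f_R0 (fun j => K * (Aj j * Y)) (m - 1) <= prod_f_R0 (fun j => z (tau j t) ^ m) (m - 1)).
  { apply prod_le. intros j Hj. split; [| apply PJ; auto].
    apply Rmult_le_pos; [lra|]. apply Rmult_le_pos; [auto| lra]. }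
  rewrite prod_pow in PP. fold Y in PP.
  rewrite !prod_mult, !prod_const in PP.
  replace (S (m - 1)) with m in PP by lia.
  assert (HYm : 0 < Y ^ m) by (apply pow_lt; auto).
  set (PA := prod_f_R0 Aj (m - 1)) in PP.
  assert (HPA1 : K ^ m * PA <= 1).
  { apply (Rmult_le_reg_r (Y ^ m)); auto. rewrite Rmult_1_l.
    rewrite Rmult_assoc. exact PP. }
  set (Rr := prod_f_R0 (fun j => Rroot m (Aj j)) (m - 1)).
  assert (Hgt' : / K < Rr) by exact Hgt.
  assert (HRm : (/ K) ^ m < Rr ^ m).
  { apply pow_lt_l; auto. left. apply Rinv_0_lt_compat. auto. }
  assert (HRPA : Rr ^ m <= PA).
  { unfold Rr. rewrite <- prod_pow. apply prod_le. intros j Hj. split.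
    - apply pow_le. apply rroot_nonneg.
    - apply rroot_pow; auto. }
  rewrite pow_inv in HRm.
  assert (HKm : 0 < K ^ m) by (apply pow_lt; auto).
  assert (K ^ m * / K ^ m = 1) by (field; lra).
  assert (K ^ m * / K ^ m < K ^ m * PA).
  { apply Rmult_lt_compat_l; auto. lra. }
  lra.
Qed.

Lemma tau_min_le0 (tau : nat -> R -> R) (n : nat) (t : R) : tau_min tau n t <= tau O t.
Proof.
  induction n as [|n IH]; simpl; [lra|].
  eapply Rle_trans; [apply Rmin_l| exact IH].
Qed.

Theorem corollary3p3 (m : nat) (t0 : R) (p tau : nat -> R -> R) :
  (1 <= m)%nat ->
  (forall i, (i < m)%nat -> cont_on_from t0 (p i)) ->
  (forall i, (i < m)%nat -> cont_on_from t0 (tau i)) ->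
  (forall i t, (i < m)%nat -> t0 <= t -> 0 <= p i t) ->
  (forall i t, (i < m)%nat -> t0 <= t -> 0 <= tau i t) ->
  (forall i t, (i < m)%nat -> t0 <= t -> tau i t <= t) ->
  (forall i, (i < m)%nat ->
     forall M, exists T, forall t, T <= t -> M <= tau i t) ->
  (forall i s t, (i < m)%nat -> t0 <= s -> s <= t -> tau i s <= tau i t) ->
  limsup_gt
    (fun t => prod_f_R0 (fun j =>
        Rroot m (prod_f_R0 (fun i => Rint (p i) (tau j t) t) (m - 1)))
      (m - 1))
    (/ (INR m ^ m)) ->
  forall (T0 : R) (x : R -> R),
    is_solution m t0 p tau T0 x -> oscillatory T0 x.
Proof.
  intros Hm Hpc Htc Hp0 Ht0 Htle Htinf Htmon Hlim T0 x Hsol.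
  destruct Hsol as [HT0 [Hxc [T1 [Hlub [x' [Hx'c [Hxd Hxeq]]]]]]].
  assert (HT0T1 : T0 <= T1).
  { apply (proj1 Hlub). split; auto.
    eapply Rle_trans; [apply tau_min_le0|]. apply Htle; auto; lia. }
  assert (Hlim' : forall T, exists t, T <= t /\ / (INR m ^ m) <
     prod_f_R0 (fun j => Rroot m (prod_f_R0 (fun i => Rint (p i) (tau j t) t) (m - 1))) (m - 1)).
  { destruct Hlim as [eps [Heps H]]. intros T. destruct (H T) as [t [Ht Hgt]].
    exists t. split; auto. lra. }
  unfold oscillatory. apply NNPP. intro Hno.
  destruct (not_all_ex_not _ _ Hno) as [T HT].
  assert (Hnz : forall s, T <= s -> T0 <= s -> x s <> 0).
  { intros s Hs1 Hs2 Hxs. apply HT. exists s. auto. }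
  set (A := Rmax (Rmax T T0) T1 + 1).
  assert (HA1 : T <= A /\ T0 <= A /\ T1 < A).
  { unfold A. pose proof (Rmax_l (Rmax T T0) T1). pose proof (Rmax_r (Rmax T T0) T1).
    pose proof (Rmax_l T T0). pose proof (Rmax_r T T0). lra. }
  assert (HxA : forall s, A <= s -> x s <> 0).
  { intros s Hs. apply Hnz; lra. }
  assert (Hder : forall s, T1 < s -> derivable_pt_lim x s (x' s)).
  { intros s Hs. apply (deriv_of_from T1); auto. apply Hxd. lra. }
  assert (Hcont : forall s, T1 < s -> continuity_pt x s).
  { intros s Hs. apply derivable_continuous_pt. exists (x' s). apply Hder; auto. }
  assert (Ht0T1 : t0 <= T1) by lra.
  destruct (Rlt_dec 0 (x A)) as [Hpos | Hneg].
  - assert (Hzpos : forall s, A <= s -> 0 < x s).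
    { intros s Hs. destruct (Rlt_dec 0 (x s)) as [|Hn]; auto. exfalso.
      assert (Hxs : x s < 0) by (pose proof (HxA s Hs); lra).
      assert (HAs : A < s) by (destruct (Req_dec A s) as [<-|]; lra).
      destruct (Ranalysis5.IVT_interv (fun u => - x u) A s) as [z0 [Hz0 Hz0x]]; auto.
      + intros a Ha. apply continuity_pt_opp. apply Hcont. lra.
      + lra.
      + lra.
      + apply (HxA z0); [lra| lra]. }
    apply (core m t0 p tau T1 A x x'); auto; try lra.
    intros s Hs. specialize (Hxeq s Hs). lra.
  - assert (HxA' : x A < 0) by (pose proof (HxA A (Rle_refl _)); lra).
    assert (Hzpos : forall s, A <= s -> 0 < - x s).
    { intros s Hs. destruct (Rlt_dec (x s) 0) as [|Hn]; [lra|]. exfalso.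
      assert (Hxs : 0 < x s) by (pose proof (HxA s Hs); lra).
      assert (HAs : A < s) by (destruct (Req_dec A s) as [<-|]; lra).
      destruct (Ranalysis5.IVT_interv x A s) as [z0 [Hz0 Hz0x]]; auto.
      + intros a Ha. apply Hcont. lra.
      + apply (HxA z0); [lra| lra]. }
    apply (core m t0 p tau T1 A (fun u => - x u) (fun u => - x' u)); auto; try lra.
    + intros s Hs. apply (derivable_pt_lim_opp x). auto.
    + intros s Hs. specialize (Hxeq s Hs).
      rewrite (sum_ext _ (fun i => - (p i s * x (tau i s)))).
      * rewrite sum_opp'. lra.
      * intros i Hi. ring.
Qed.
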